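(* Let $G$ be an $\varepsilon$-graph with finite vertex set $\mathcal{V}\subset\mathbb{R}^K$. Then for all $x,y\in\mathcal{V}$, $$\tfrac14\,\varepsilon\,\big(d_{G,SP}(x,y)-1\big)\le d_{G,E}(x,y)\le\varepsilon\,d_{G,SP}(x,y).$$
   Context: The $\varepsilon$-graph on $\mathcal{V}$ joins distinct $x,y$ iff $\|x-y\|\le\varepsilon$. For a path $p=(v_0,\dots,v_l)$ in $G$ let $l=|p|$ be its number of edges. $d_{G,SP}(x,y)=\min_p|p|$ and $d_{G,E}(x,y)=\min_p\sum_{i=1}^{|p|}\|v_{i-1}-v_i\|$, minima over paths from $x$ to $y$ (the graph is assumed connected so these are finite). *)

(* Defs.v *)
From HB Require Import structures.
From mathcomp Require Import all_boot all_order all_algebra.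
From mathcomp Require Import boolp classical_sets reals.
Set Implicit Arguments. Unset Strict Implicit. Unset Printing Implicit Defensive.
Import Order.TTheory GRing.Theory Num.Theory.
Local Open Scope ring_scope.
Local Open Scope classical_set_scope.

Section EpsGraph.
Variables (R : realType) (K : nat).
Implicit Types (u v x y : 'rV[R]_K) (s : seq 'rV[R]_K).

Definition enorm v : R := Num.sqrt (\sum_(i < K) v ord0 i ^+ 2).

Definition eedge (eps : R) u v : bool := (u != v) && (enorm (u - v) <= eps).

(* x :: s is a path (v_0 = x, ..., v_l = last x s) in the eps-graph on V
   from x to y; its number of edges is size s. *)
Definition is_epath (eps : R) (V : seq 'rV[R]_K) x y s : bool :=
  [&& path (eedge eps) x s, all (mem V) (x :: s) & last x s == y].

Fixpoint plen x s : R :=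
  if s is v :: s' then enorm (x - v) + plen v s' else 0.

Definition eg_connected (eps : R) V : Prop :=
  forall x y, x \in V -> y \in V -> exists s, is_epath eps V x y s.

Definition dSP (eps : R) V x y : nat :=
  match pselect (exists n, `[< exists s, is_epath eps V x y s /\ size s = n >]) with
  | left H => ex_minn H
  | right _ => 0%N
  end.

(* d_{G,E}(x,y): minimal Euclidean length of a path from x to y
   (taken as the infimum, which is attained since the graph is finite). *)
Definition dE (eps : R) V x y : R :=
  inf [set plen x s | s in [set s | is_epath eps V x y s]].

End EpsGraph.

(* Main.v *)
Require Import Defs.
From HB Require Import structures.
From mathcomp Require Import all_boot all_order all_algebra.
From mathcomp Require Import boolp classical_sets reals.
From mathcomp Require Import ring lra zify.
Import Order.TTheory GRing.Theory Num.Theory.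
Local Open Scope ring_scope.
Local Open Scope classical_set_scope.

Lemma cs_sum (R : realType) (n : nat) (a b : 'I_n -> R) :
  (\sum_i a i * b i) ^+ 2 <= (\sum_i a i ^+ 2) * (\sum_i b i ^+ 2).
Proof.
have H : 0 <= \sum_i \sum_j (a i * b j - a j * b i) ^+ 2.
  by apply: sumr_ge0 => i _; apply: sumr_ge0 => j _; exact: sqr_ge0.
have E : \sum_i \sum_j (a i * b j - a j * b i) ^+ 2 =
  2 * ((\sum_i a i ^+ 2) * (\sum_i b i ^+ 2) - (\sum_i a i * b i) ^+ 2).
  have E1 : \sum_i \sum_j (a i * b j - a j * b i) ^+ 2 =
     \sum_i \sum_j (a i ^+2 * b j ^+ 2) + \sum_i \sum_j (a j ^+2 * b i ^+ 2)
     - 2 * \sum_i \sum_j (a i * b i * (a j * b j)).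
    rewrite mulr_sumr -big_split -sumrB /=; apply: eq_bigr => i _.
    rewrite mulr_sumr -big_split -sumrB /=; apply: eq_bigr => j _.
    ring.
  rewrite E1 (exchange_big _ _ _ _ _ (fun i j => a j ^+ 2 * b i ^+ 2)) /=.
  have AB : (\sum_i a i ^+ 2) * (\sum_i b i ^+ 2) = \sum_i \sum_j (a i ^+2 * b j ^+ 2).
    by rewrite mulr_suml; apply: eq_bigr => i _; rewrite mulr_sumr.
  have SS : (\sum_i a i * b i) ^+ 2 = \sum_i \sum_j (a i * b i * (a j * b j)).
    by rewrite expr2 mulr_suml; apply: eq_bigr => i _; rewrite mulr_sumr.
  rewrite AB SS; ring.
lra.
Qed.

Lemma enorm_triangle (R : realType) (K : nat) (u v : 'rV[R]_K) :
  enorm (u + v) <= enorm u + enorm v.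
Proof.
rewrite /enorm.
set A := \sum_i u ord0 i ^+ 2. set B := \sum_i v ord0 i ^+ 2.
have A0 : 0 <= A by apply: sumr_ge0 => i _; exact: sqr_ge0.
have B0 : 0 <= B by apply: sumr_ge0 => i _; exact: sqr_ge0.
have -> : \sum_i (u + v) ord0 i ^+ 2 = A + B + 2 * \sum_i u ord0 i * v ord0 i.
  rewrite /A /B mulr_sumr -!big_split /=; apply: eq_bigr => i _.
  rewrite mxE; ring.
have S2 := @cs_sum R K (fun i => u ord0 i) (fun i => v ord0 i).
set S := \sum_i u ord0 i * v ord0 i in S2 *.
have SS : S <= Num.sqrt A * Num.sqrt B.
  rewrite -sqrtrM //; apply: le_trans (ler_norm S) _.
  by rewrite -sqrtr_sqr ler_sqrt ?mulr_ge0.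
rewrite -[X in _ <= X]ger0_norm ?addr_ge0 ?sqrtr_ge0 //.
rewrite -sqrtr_sqr ler_sqrt ?sqr_ge0 //.
rewrite sqrrD !sqr_sqrtr //. lra.
Qed.

Lemma enorm_ge0 (R : realType) (K : nat) (u : 'rV[R]_K) : 0 <= enorm u.
Proof. exact: sqrtr_ge0. Qed.

Lemma shortcut (R : realType) (K : nat) (eps : R) (V : seq 'rV[R]_K) (y : 'rV[R]_K)
  (heps : 0 < eps) (n : nat) : forall x s, (size s <= n)%N -> is_epath eps V x y s ->
  exists s', is_epath eps V x y s' /\ eps / 4 * ((size s')%:R - 1) <= plen x s.
Proof.
elim: n => [|n IH] x s.
  rewrite leqn0 => /nilP -> P; exists [::]; split => //=; lra.
case: s => [|v [|w t]] Hs P.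
- exists [::]; split => //=; lra.
- exists [:: v]; split => //=; have := @enorm_ge0 R K (x - v : 'rV[R]_K); lra.
move: P; rewrite /is_epath /= => /and3P [/and3P [exv evw pwt] /and4P [xV vV wV tV] lt].
rewrite /eedge in exv evw.
move/andP: exv => [xv nxv]; move/andP: evw => [vw nvw].
have Hsz : (size t < n)%N by move: Hs => /=; lia.
have tri : enorm (x - w) <= enorm (x - v) + enorm (v - w).
  by have := @enorm_triangle R K (x - v) (v - w); rewrite addrA subrK.
have gv := @enorm_ge0 R K (x - v : 'rV[R]_K); have gw := @enorm_ge0 R K (v - w : 'rV[R]_K).
case: (ltrP eps (enorm (x - v) + enorm (v - w))) => hsum.
- have Pt : is_epath eps V w y t by rewrite /is_epath /= pwt wV tV lt.
  have [s' [Ps' Hs']] := IH w t (ltnW Hsz) Pt.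
  exists [:: v, w & s']; split.
    move: Ps'; rewrite /is_epath /= /eedge => /and3P [p1 /andP [_ a1] l1].
    by rewrite xv nxv vw nvw p1 xV vV wV a1 l1.
  rewrite /= (_ : (size s').+2%:R = (size s')%:R + 2 :> R); last by rewrite -addn2 natrD.
  lra.
- have [exw|nxw] := eqVneq x w.
  + subst w.
    have Pt : is_epath eps V x y t by rewrite /is_epath /= pwt xV tV lt.
    have [s' [Ps' Hs']] := IH x t (ltnW Hsz) Pt.
    exists s'; split => //=; lra.
  + have Pt : is_epath eps V x y (w :: t).
      rewrite /is_epath /= /eedge nxw pwt xV wV tV lt /= andbT.
      rewrite andbT; exact: le_trans tri hsum.
    have [s' [Ps' Hs']] := IH x (w :: t) Hsz Pt.
    exists s'; split => //=.
    move: Hs' => /=; lra.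
Qed.

Lemma plen_ge0 (R : realType) (K : nat) (x : 'rV[R]_K) s : 0 <= plen x s.
Proof.
elim: s x => [|v s IH] x /=; first exact: lexx.
exact: addr_ge0 (@enorm_ge0 R K _) (IH v).
Qed.

Lemma plen_le (R : realType) (K : nat) (eps : R) (x : 'rV[R]_K) s :
  path (eedge eps) x s -> plen x s <= eps * (size s)%:R.
Proof.
elim: s x => [|v s IH] x /=; first by rewrite mulr0.
move=> /andP [/andP [_ h] p]; have := IH v p.
rewrite (_ : (size s).+1%:R = (size s)%:R + 1 :> R); last by rewrite -addn1 natrD.
lra.
Qed.

Theorem mainTheorem7 (R : realType) (K : nat) (eps : R) (V : seq 'rV[R]_K)
    (heps : 0 < eps) (hconn : eg_connected eps V)
    (x y : 'rV[R]_K) (hx : x \in V) (hy : y \in V) :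
  eps / 4 * ((dSP eps V x y)%:R - 1) <= dE eps V x y /\
  dE eps V x y <= eps * (dSP eps V x y)%:R.
Proof.
rewrite /dSP; case: pselect => [H|H]; last first.
  exfalso; apply: H; have [s0 P0] := hconn x y hx hy.
  by exists (size s0); apply/asboolP; exists s0.
case: (ex_minnP H) => m /asboolP [sm [Psm Ssm]] Hmin.
have inS : [set plen x s | s in [set s | is_epath eps V x y s]] (plen x sm).
  by exists sm.
split.
- apply: lb_le_inf; first by exists (plen x sm).
  move=> z [s Ps <-].
  have [s' [Ps' Hs']] := @shortcut R K eps V y heps (size s) x s (leqnn _) Ps.
  have Hm : (m <= size s')%N by apply: Hmin; apply/asboolP; exists s'.
  apply: le_trans Hs'.
  apply: ler_wpM2l; first lra.
  by rewrite lerD2r ler_nat.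
- apply: le_trans (ge_inf _ inS) _.
    by exists 0 => z [s _ <-]; exact: plen_ge0.
  rewrite -Ssm; apply: plen_le.
  by move: Psm => /and3P [].
Qed.
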